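(* Let $\mathcal A$ be a full adjunction implicative ordered combinatory algebra with underlying complete lattice $(A,\le)$, and let $\mathcal P_\bullet(A_\Pi)$ be computed in the associated abstract Krivine structure $\mathcal K_{\mathcal A\bullet}$ (where $\Pi=A$ and $s\perp\pi\iff s\le\pi$), ordered by $C\le C'\iff C\supseteq C'$. Define $\iota:A\to\mathcal P_\bullet(A_\Pi)$, $\iota(a)={\uparrow}a=\{x\in A:a\le x\}$, and $\rho:\mathcal P_\bullet(A_\Pi)\to A$, $\rho(C)=\inf C$. Then $\iota,\rho$ are monotone and form a Galois connection $\iota\dashv\rho$: for $a\in A$ and $C\in\mathcal P_\bullet(A_\Pi)$, $a\le\rho(C)\iff\iota(a)\supseteq C$. Moreover $\rho\circ\iota=\mathrm{id}_A$, and $\iota(\rho(C))\supseteq C$ for all $C\in\mathcal P_\bullet(A_\Pi)$.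
   Context: A full adjunction implicative ordered combinatory algebra is an inf-complete poset $(A,\le)$ with application $ab$ monotone in both arguments, implication $a\to b$ antimonotone in the first and monotone in the second argument, elements $\mathsf k,\mathsf s$ with $\mathsf k ab\le a$, $\mathsf s abc\le ac(bc)$, such that $a\le b\to c\iff ab\le c$, and a subset $\Phi\subseteq A$ closed under application containing $\mathsf s,\mathsf k$. In $\mathcal K_{\mathcal A\bullet}$, $\Lambda=\Pi=A$ and $t\perp\pi$ iff $t\le\pi$. Polars: $L^\perp=\{\pi:\forall t\in L,\ t\le\pi\}$, ${}^\perp P=\{t:\forall\pi\in P,\ t\le\pi\}$; $\overline P=({}^\perp P)^\perp$; $\widehat P=\bigcup_{\pi\in P}\overline{\{\pi\}}$; $\mathcal P_\bullet(A_\Pi)=\{P\subseteq A:\widehat P=P\}$. *)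

(* Defs.v *)
Set Implicit Arguments.

Record FAIOCA := {
  car :> Type;
  le : car -> car -> Prop;
  le_refl : forall a, le a a;
  le_trans : forall a b c, le a b -> le b c -> le a c;
  le_antisym : forall a b, le a b -> le b a -> a = b;
  inf : (car -> Prop) -> car;
  inf_lb : forall (X : car -> Prop) x, X x -> le (inf X) x;
  inf_glb : forall (X : car -> Prop) a, (forall x, X x -> le a x) -> le a (inf X);
  app : car -> car -> car;
  app_mono : forall a a' b b', le a a' -> le b b' -> le (app a b) (app a' b');
  imp : car -> car -> car;
  imp_mono : forall a a' b b', le a' a -> le b b' -> le (imp a b) (imp a' b');
  kk : car;
  ss : car;
  kk_ax : forall a b, le (app (app kk a) b) a;
  ss_ax : forall a b c, le (app (app (app ss a) b) c) (app (app a c) (app b c));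
  adj : forall a b c, le a (imp b c) <-> le (app a b) c;
  Phi : car -> Prop;
  Phi_app : forall a b, Phi a -> Phi b -> Phi (app a b);
  Phi_s : Phi ss;
  Phi_k : Phi kk
}.

Section AKS.
Context {A : FAIOCA}.

(* Abstract Krivine structure K_{A.}: Lambda = Pi = A, t _|_ pi iff t <= pi. *)
Definition orth (t p : A) : Prop := le A t p.

Definition polarL (L : A -> Prop) : A -> Prop :=
  fun p => forall t, L t -> orth t p.
Definition polarP (P : A -> Prop) : A -> Prop :=
  fun t => forall p, P p -> orth t p.
Definition closure (P : A -> Prop) : A -> Prop := polarL (polarP P).
Definition hat (P : A -> Prop) : A -> Prop :=
  fun x => exists p, P p /\ closure (fun y => y = p) x.

Definition in_Pbullet (P : A -> Prop) : Prop := forall x, hat P x <-> P x.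

Definition subset (P Q : A -> Prop) : Prop := forall x, P x -> Q x.

Definition iota (a : A) : A -> Prop := fun x => le A a x.
Definition rho (C : A -> Prop) : A := inf A C.
End AKS.

(* Main.v *)
Require Import Defs.

Theorem mainTheorem13 (A : FAIOCA) :
  (* iota lands in P_.(A_Pi) *)
  (forall a : A, in_Pbullet (iota a)) /\
  (* iota monotone (order on P_. is reverse inclusion) *)
  (forall a b : A, le A a b -> subset (iota b) (iota a)) /\
  (* rho monotone *)
  (forall C C' : A -> Prop, in_Pbullet C -> in_Pbullet C' ->
      subset C' C -> le A (rho C) (rho C')) /\
  (* Galois connection iota -| rho *)
  (forall (a : A) (C : A -> Prop), in_Pbullet C ->
      (le A a (rho C) <-> subset C (iota a))) /\
  (* rho o iota = id *)
  (forall a : A, rho (iota a) = a) /\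
  (* iota (rho C) contains C *)
  (forall C : A -> Prop, in_Pbullet C -> subset C (iota (rho C))).
Proof.
  assert (Hcl : forall (p x : A), closure (fun y => y = p) x <-> le A p x).
  { intros p x; unfold closure, polarL, polarP, orth; split.
    - intros H. apply H. intros q ->. apply le_refl.
    - intros H t Ht. apply le_trans with p; [apply Ht; reflexivity | exact H]. }
  split; [| split; [| split; [| split; [| split]]]].
  - intros a x; unfold hat, iota; split.
    + intros [p [Hp Hc]]. apply Hcl in Hc. eapply le_trans; eauto.
    + intros H. exists x. split; [exact H | apply Hcl, le_refl].
  - intros a b Hab x Hx. unfold iota in *. eapply le_trans; eauto.
  - intros C C' _ _ Hs. unfold rho. apply inf_glb. intros x Hx. apply inf_lb. auto.
  - intros a C _; unfold rho, subset, iota; split.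
    + intros H x Hx. eapply le_trans; [exact H | apply inf_lb; exact Hx].
    + intros H. apply inf_glb. exact H.
  - intros a. unfold rho, iota. apply le_antisym.
    + apply inf_lb, le_refl.
    + apply inf_glb. auto.
  - intros C _ x Hx. unfold iota, rho. apply inf_lb; exact Hx.
Qed.
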